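(* Let $Y$ be a conformal Killing vector field of $g$, $\mathcal L_Y g_{\mu\nu}=2\omega(\mathrm{x})g_{\mu\nu}$. Let $(\mathrm{x}(\lambda),n(\lambda))$ be a solution of the Euler–Lagrange equations of $L$, fix $\lambda_0$, and set $W(\lambda)=\int_{\lambda_0}^{\lambda}n(s)\,\omega(\mathrm{x}(s))\,ds$. Then: (i) the non-local quantity $I(\lambda)=Y^\mu p_\mu+m^2W(\lambda)$ is constant along the solution; (ii) the non-local vector field $X=\left(Y^\mu-\frac{\dot{\mathrm{x}}^\mu}{n}W\right)\frac{\partial}{\partial\mathrm{x}^\mu}$, whose first prolongation $\mathrm{pr}^{(1)}X=X+\frac{dX^\mu}{d\lambda}\frac{\partial}{\partial\dot{\mathrm{x}}^\mu}$ is evaluated along the solution (using the equations of motion to eliminate accelerations), satisfies $\mathrm{pr}^{(1)}X(L)=0$, so that $X$ is a (non-local) Noether symmetry with constant surface term whose Noether charge is $I$.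
   Context: $(\mathcal M,g)$ is a pseudo-Riemannian manifold. Geodesic system: for a curve $\mathrm{x}^\mu(\lambda)$ and a positive function $n(\lambda)$ (the einbein), $L=\frac{1}{2n}g_{\mu\nu}\dot{\mathrm{x}}^\mu\dot{\mathrm{x}}^\nu-\frac{m^2}{2}n$ with $m$ a constant; its Euler–Lagrange equations are equivalent to $\ddot{\mathrm{x}}^\mu+\Gamma^\mu_{\kappa\lambda}\dot{\mathrm{x}}^\kappa\dot{\mathrm{x}}^\lambda=\dot{\mathrm{x}}^\mu\frac{d}{d\lambda}\ln n$ together with $\frac{1}{n^2}g_{\mu\nu}\dot{\mathrm{x}}^\mu\dot{\mathrm{x}}^\nu+m^2=0$. Momenta: $p_\mu=\frac1n g_{\mu\nu}\dot{\mathrm{x}}^\nu$. *)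

(* Defs.v *)
From HB Require Import structures.
From mathcomp Require Import all_boot all_order all_algebra.
From mathcomp Require Import all_classical all_reals all_analysis.
Set Implicit Arguments. Unset Strict Implicit. Unset Printing Implicit Defensive.
Import Order.TTheory GRing.Theory Num.Theory.
Import numFieldNormedType.Exports.
Local Open Scope classical_set_scope.
Local Open Scope ring_scope.

Section Geo.
Variables (R : realType) (N : nat).

(* Points of a coordinate chart: row vectors in R^N; coordinates x 0 mu. *)
Definition xcomp (x : 'rV[R]_N) (mu : 'I_N) : R := x ord0 mu.

Definition evec (mu : 'I_N) : 'rV[R]_N := delta_mx ord0 mu.

Definition pder (f : 'rV[R]_N -> R) (mu : 'I_N) (x : 'rV[R]_N) : R :=
  derive f x (evec mu).

Definition lie_metric (g : 'I_N -> 'I_N -> 'rV[R]_N -> R)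
  (Y : 'I_N -> 'rV[R]_N -> R) (mu nu : 'I_N) (x : 'rV[R]_N) : R :=
  \sum_k (Y k x * pder (g mu nu) k x
          + g k nu x * pder (Y k) mu x
          + g mu k x * pder (Y k) nu x).

Definition Lag (g : 'I_N -> 'I_N -> 'rV[R]_N -> R) (m : R)
  (x v : 'rV[R]_N) (n : R) : R :=
  (2 * n)^-1 * (\sum_mu \sum_nu g mu nu x * xcomp v mu * xcomp v nu)
  - m ^+ 2 / 2 * n.

Definition dL_dx g m (mu : 'I_N) x v n : R := pder (fun y => Lag g m y v n) mu x.
Definition dL_dv g m (mu : 'I_N) x v n : R := pder (fun w => Lag g m x w n) mu v.
Definition dL_dn g m x v (n : R) : R := derive1 (fun s => Lag g m x v s) n.

Definition momentum (g : 'I_N -> 'I_N -> 'rV[R]_N -> R) (mu : 'I_N)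
  (x v : 'rV[R]_N) (n : R) : R :=
  n^-1 * \sum_nu g mu nu x * xcomp v nu.

Definition oint (f : R -> R) (a b : R) : R :=
  if a <= b then Rintegral (@lebesgue_measure R) `[a, b] f
  else - Rintegral (@lebesgue_measure R) `[b, a] f.

End Geo.

(* Main.v *)
Require Import Defs.
From HB Require Import structures.
From mathcomp Require Import all_boot all_order all_algebra.
From mathcomp Require Import all_classical all_reals all_analysis.
From mathcomp Require Import ring lra.
Import Order.TTheory GRing.Theory Num.Theory.
Import numFieldNormedType.Exports.
Local Open Scope classical_set_scope.
Local Open Scope ring_scope.
Set Implicit Arguments. Unset Strict Implicit.

Section Helpers.
Variables (R : realType) (V : normedModType R).
Implicit Types (f g : V -> R) (x v : V).

Lemma isdD f g x v a b : is_derive x v f a -> is_derive x v g b ->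
  is_derive x v (fun y => f y + g y) (a + b).
Proof. by move=> ? ?; exact: is_deriveD. Qed.

Lemma isdB f g x v a b : is_derive x v f a -> is_derive x v g b ->
  is_derive x v (fun y => f y - g y) (a - b).
Proof. by move=> ? ?; exact: is_deriveB. Qed.

Lemma isdM f g x v a b : is_derive x v f a -> is_derive x v g b ->
  is_derive x v (fun y => f y * g y) (f x * b + g x * a).
Proof. by move=> ? ?; exact: is_deriveM. Qed.

Lemma isdC x v (c : R) : is_derive x v (fun _ : V => c : R) 0.
Proof. exact: is_derive_cst. Qed.

Lemma isd_sum n (h : 'I_n -> V -> R) x v (dh : 'I_n -> R) :
  (forall i, is_derive x v (h i) (dh i)) ->
  is_derive x v (fun y => \sum_(i < n) h i y) (\sum_(i < n) dh i).
Proof. by move=> H; rewrite -fct_sumE; exact: is_derive_sum. Qed.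

Lemma isdV f x v a : f x != 0 -> is_derive x v f a ->
  is_derive x v (fun y => (f y)^-1) (- (f x) ^- 2 * a).
Proof.
move=> fx0 Df; constructor.
  by apply: derivableV => //; case: Df.
by rewrite deriveV //; case: Df => _ ->.
Qed.

Lemma isd_diff f x v : differentiable f x -> is_derive x v f ('D_v f x).
Proof. by move=> df; apply: derivableP; exact: diff_derivable. Qed.

Lemma isd_eq f x v a b : is_derive x v f a -> a = b -> is_derive x v f b.
Proof. by move=> ? <-. Qed.

Lemma isd_ext f g x v a : f = g -> is_derive x v f a -> is_derive x v g a.
Proof. by move=> ->. Qed.

End Helpers.
Section H2.
Variables (R : realType) (V W : normedModType R).

Lemma derive_line (f : V -> W) x v :
  'D_v f x = 'D_1 (fun h : R => f (h *: v + x)) 0.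
Proof.
rewrite /derive; congr lim.
have -> : (fun h : R => h^-1 *: ((f \o shift x) (h *: v) - f x)) =
  (fun h : R => h^-1 *: (((fun h0 : R => f (h0 *: v + x)) \o shift 0) h%:A - f (0 *: v + x))).
  apply/funext => h /=.
  by rewrite [h%:A]mulr1 addr0 scale0r add0r.
by [].
Qed.

Lemma isd_line (f : V -> W) x v c :
  is_derive (0:R) 1 (fun h : R => f (h *: v + x)) c -> is_derive x v f c.
Proof.
move=> H; have H1 := @ex_derive _ _ _ _ _ _ _ H.
have H2 := @derive_val _ _ _ _ _ _ _ H.
apply: DeriveDef; first by apply/derivable1P.
by rewrite derive_line.
Qed.
End H2.

Section H3.
Variables (R : realType) (N : nat).

Lemma chain (F : 'rV[R]_N -> R) (c : R -> 'rV[R]_N) l :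
  differentiable F (c l) -> derivable c l 1 ->
  is_derive l 1 (fun s => F (c s))
    (\sum_k pder F k (c l) * xcomp (derive1 c l) k).
Proof.
move=> dF dc.
have dc' := dc; move/derivable1_diffP: dc' => dc'.
have dFc : differentiable (F \o c) l by exact: differentiable_comp.
apply: DeriveDef; first exact/derivable1_diffP.
rewrite (deriveE (f := F \o c)) // diff_comp //= -(deriveE (f:=c)) // -derive1E.
rewrite {1}(row_sum_delta (derive1 c l)) linear_sum /=.
apply: eq_bigr => k _; rewrite linearZ /= /pder deriveE //.
by rewrite mulrC.
Qed.

End H3.

Section H4.
Variables (R : realType) (N : nat).

Lemma isd_id (x : R) : is_derive x (1:R) (fun h : R => h : R) 1.
Proof. exact: is_derive_id. Qed.

Lemma isd_aff (x : R) (c d : R) : is_derive x (1:R) (fun h : R => h * c + d : R) c.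
Proof.
apply: isd_eq.
by rewrite scaler0 add0r addr0 [_ *: _]mulr1.
Qed.

Lemma sum_delta (F : 'I_N -> R) mu :
  \sum_b F b * (b == mu)%:R = F mu.
Proof.
rewrite (bigD1 mu) //= eqxx mulr1 big1 ?addr0 // => b /negbTE ->.
by rewrite mulr0.
Qed.

Lemma xcomp_line (h : R) mu (w : 'rV[R]_N) b :
  xcomp (h *: evec R mu + w) b = h * (b == mu)%:R + xcomp w b.
Proof. by rewrite /xcomp /evec !mxE eqxx. Qed.

Lemma dL_dv_E (g : 'I_N -> 'I_N -> 'rV[R]_N -> R) (m : R) (mu : 'I_N) (x w : 'rV[R]_N) (n : R) :
  dL_dv g m mu x w n = (2 * n)^-1 * \sum_b (g mu b x + g b mu x) * xcomp w b.
Proof.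
rewrite /dL_dv /pder.
suff H : is_derive w (evec R mu) (fun w0 => Lag g m x w0 n : R)
   ((2 * n)^-1 * \sum_b (g mu b x + g b mu x) * xcomp w b).
  exact: (@derive_val _ _ _ _ _ _ _ H).
apply: isd_line.
have -> : (fun h : R => Lag g m x (h *: evec R mu + w) n : R) =
  (fun h : R => (2 * n)^-1 * (\sum_a \sum_b g a b x * (h * (a == mu)%:R + xcomp w a)
      * (h * (b == mu)%:R + xcomp w b)) - m ^+ 2 / 2 * n).
  by apply/funext => h; rewrite /Lag; under eq_bigr do under eq_bigr do rewrite !xcomp_line.
apply: (isd_eq (isdB (isdM (isdC _ _ _) (isd_sum (fun a => isd_sum (fun b =>
   isdM (isdM (isdC _ _ _) (isd_aff _ _ _)) (isd_aff _ _ _))))) (isdC _ _ _))).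
rewrite !mulr0 addr0 subr0; congr (_ * _).
under eq_bigr do under eq_bigr do rewrite !mul0r !add0r mulr0 addr0.
rewrite (eq_bigr (fun i => \sum_j g i j x * xcomp w i * (j == mu)%:R +
   \sum_j xcomp w j * g i j x * (i == mu)%:R)); last first.
  by move=> i _; rewrite -big_split /=; apply: eq_bigr => j _; rewrite mulrA.
rewrite big_split /= [X in _ + X]exchange_big /=.
under eq_bigr do rewrite sum_delta.
under [X in _ + X]eq_bigr do rewrite sum_delta.
rewrite addrC -big_split /=; apply: eq_bigr => b _.
by rewrite mulrDl mulrC.
Qed.

Lemma dL_dx_E (g : 'I_N -> 'I_N -> 'rV[R]_N -> R) (m : R) (mu : 'I_N) (x w : 'rV[R]_N) (n : R) :
  (forall a b, differentiable (g a b) x) ->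
  dL_dx g m mu x w n =
  (2 * n)^-1 * \sum_a \sum_b pder (g a b) mu x * xcomp w a * xcomp w b.
Proof.
move=> dg; rewrite /dL_dx /pder.
suff H : is_derive x (evec R mu) (fun y => Lag g m y w n : R)
   ((2 * n)^-1 * \sum_a \sum_b pder (g a b) mu x * xcomp w a * xcomp w b).
  exact: (@derive_val _ _ _ _ _ _ _ H).
rewrite /Lag.
apply: (isd_eq (isdB (isdM (isdC _ _ _) (isd_sum (fun a => isd_sum (fun b =>
   isdM (isdM (isd_diff _ (dg a b)) (isdC _ _ _)) (isdC _ _ _))))) (isdC _ _ _))).
rewrite !mulr0 addr0 subr0; congr (_ * _).
apply: eq_bigr => a _; apply: eq_bigr => b _.
by rewrite !mulr0 !add0r /pder; ring.
Qed.

Lemma dL_dn_E (g : 'I_N -> 'I_N -> 'rV[R]_N -> R) (m : R) (x w : 'rV[R]_N) (n : R) :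
  n != 0 -> dL_dn g m x w n = 0 ->
  \sum_a \sum_b g a b x * xcomp w a * xcomp w b = - (m ^+ 2 * n ^+ 2).
Proof.
move=> n0; rewrite /dL_dn derive1E /Lag.
set Q := \sum_a _.
have H : is_derive n (1:R) (fun s : R => (2 * s)^-1 * Q - m ^+ 2 / 2 * s : R)
   (- (2 * n) ^- 2 * 2 * Q - m ^+ 2 / 2).
  apply: (isd_eq (isdB (isdM (isdV _ (isdM (isdC _ _ _) (isd_id _))) (isdC _ _ _))
     (isdM (isdC _ _ _) (isd_id _)))).
    by rewrite mulf_neq0 // pnatr_eq0.
  by rewrite !mulr0 !addr0 !mulr1 add0r mulrC.
rewrite (@derive_val _ _ _ _ _ _ _ H) => /eqP; rewrite subr_eq0 => /eqP HQ.
have e : (Q : R) = - ((2*n)^+2 / 2) * (- (2*n)^-2 * 2 * Q).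
  by field.
by rewrite e HQ; field.
Qed.
End H4.

Section FTC2.
Variable R : realType.

Notation mu := (@lebesgue_measure R).

Lemma oint_split (F : R -> R) c u x t :
  mu.-integrable `[c, u] (EFin \o F) -> c <= x <= u -> c <= t <= u ->
  oint F x t = \int[mu]_(s in `[c, t]) F s - \int[mu]_(s in `[c, x]) F s.
Proof.
move=> iF /andP[cx xu] /andP[ct tu].
have key : forall y z, c <= y -> y <= z -> z <= u ->
   \int[mu]_(s in `[c, z]) F s - \int[mu]_(s in `[c, y]) F s =
   \int[mu]_(s in `[y, z]) F s.
  move=> y z cy yz zu.
  have iz : mu.-integrable `[c, z] (EFin \o F).
    by apply: integrableS iF => //; apply: subset_itv; rewrite bnd_simp.
  rewrite (@Rintegral_itvB _ F (BLeft c) (BRight z) y) ?bnd_simp //.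
  rewrite Rintegral_itv_obnd_cbnd //.
  by apply: integrableS iz => //; apply: subset_itv; rewrite bnd_simp.
rewrite /oint; case: ifPn => xt.
  by rewrite key.
rewrite -key ?opprB //; last by rewrite ltW // ltNge.
Qed.


Lemma ftc_oint (F : R -> R) a b lam0 l : a < lam0 < b -> a < l < b ->
  (forall s, a < s < b -> {for s, continuous F}) ->
  is_derive l (1:R) (fun t => oint F lam0 t) (F l).
Proof.
move=> /andP[al0 l0b] /andP[al lb] cF.
set mn := Num.min lam0 l; set mx := Num.max lam0 l.
have h1 : a < mn by rewrite lt_min al0 al.
have h2 : mn <= lam0 by rewrite ge_min lexx.
have h3 : mn <= l by rewrite ge_min lexx orbT.
have h4 : lam0 <= mx by rewrite le_max lexx.
have h5 : l <= mx by rewrite le_max lexx orbT.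
have h6 : mx < b by rewrite gt_max l0b lb.
set c := (a + mn) / 2; set u := (mx + b) / 2.
have ac : a < c by rewrite /c; lra.
have cl : c < l by rewrite /c; lra.
have cl0 : c < lam0 by rewrite /c; lra.
have lu : l < u by rewrite /u; lra.
have l0u : lam0 < u by rewrite /u; lra.
have ub : u < b by rewrite /u; lra.
have iF : mu.-integrable `[c, u] (EFin \o F).
  apply: continuous_compact_integrable; first exact: segment_compact.
  apply: continuous_in_subspaceT => s; rewrite inE /= in_itv /= => /andP[cs su].
  by apply: cF; apply/andP; split; lra.
have [dG G'] := @continuous_FTC1_closed R F c l u lu iF cl (cF l (introT andP (conj al lb))).
have HG : is_derive l (1:R) (fun t => \int[mu]_(s in `[c, t]) F s) (F l).
  by constructor; [exact: dG | rewrite -derive1E].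
have HH := isdB HG (isdC l 1 (\int[mu]_(s in `[c, lam0]) F s)).
rewrite subr0 in HH.
apply: (near_eq_is_derive _ HH).
have : \forall t \near l, t \in `]c, u[ by apply: near_in_itvoo; rewrite in_itv /= cl lu.
apply: filterS => t; rewrite in_itv /= => /andP[ct tu].
rewrite (oint_split iF) //; apply/andP; split; lra.
Qed.

End FTC2.

Section Alg.
Variables (R : comNzRingType) (N : nat).

Lemma E1 (F : 'I_N -> 'I_N -> 'I_N -> R) :
  \sum_i \sum_j \sum_k F i j k = \sum_j \sum_k \sum_i F i j k.
Proof. by rewrite exchange_big; apply: eq_bigr => j _; rewrite exchange_big. Qed.

Lemma E2 (F : 'I_N -> 'I_N -> 'I_N -> R) :
  \sum_i \sum_j \sum_k F i j k = \sum_k \sum_j \sum_i F i j k.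
Proof.
rewrite E1 E1; apply: eq_bigr => k _; exact: exchange_big.
Qed.

Lemma key_alg (g : 'I_N -> 'I_N -> R) (pg : 'I_N -> 'I_N -> 'I_N -> R)
  (Y : 'I_N -> R) (pY : 'I_N -> 'I_N -> R) (w : 'I_N -> R) (c : R) :
  \sum_mu (Y mu * (c * \sum_a \sum_b pg a b mu * w a * w b)
     + (c * \sum_b (g mu b + g b mu) * w b) * (\sum_k pY mu k * w k))
  = c * \sum_a \sum_b (\sum_k (Y k * pg a b k + g k b * pY k a + g a k * pY k b))
        * w a * w b.
Proof.
have h1 : forall mu, \sum_a \sum_b Y mu * pg a b mu * w a * w b =
     Y mu * \sum_a \sum_b pg a b mu * w a * w b.
  move=> mu; rewrite mulr_sumr; apply: eq_bigr => a _; rewrite mulr_sumr.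
  by apply: eq_bigr => b _; rewrite !mulrA.
have h2 : forall mu, \sum_b \sum_k (g mu b + g b mu) * w b * (pY mu k * w k) =
     (\sum_b (g mu b + g b mu) * w b) * (\sum_k pY mu k * w k).
  by move=> mu; rewrite big_distrlr.
have h3 : forall a b, (\sum_k (Y k * pg a b k + g k b * pY k a + g a k * pY k b)) * w a * w b
   = \sum_k (Y k * pg a b k * w a * w b) + \sum_k (g k b * pY k a * w a * w b)
     + \sum_k (g a k * pY k b * w a * w b).
  move=> a b; rewrite !mulr_suml -!big_split /=; apply: eq_bigr => k _; ring.
have hr : \sum_a \sum_b (\sum_k (Y k * pg a b k + g k b * pY k a + g a k * pY k b)) * w a * w b
  = \sum_a \sum_b \sum_k (Y k * pg a b k * w a * w b) + \sum_a \sum_b \sum_k (g k b * pY k a * w a * w b)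
     + \sum_a \sum_b \sum_k (g a k * pY k b * w a * w b).
  rewrite -!big_split; apply: eq_bigr => a _; rewrite -!big_split; apply: eq_bigr => b _.
  exact: h3.
rewrite hr !mulrDr -addrA.
have -> : \sum_mu (Y mu * (c * \sum_a \sum_b pg a b mu * w a * w b)
     + (c * \sum_b (g mu b + g b mu) * w b) * (\sum_k pY mu k * w k))
  = c * \sum_mu \sum_a \sum_b Y mu * pg a b mu * w a * w b
    + (c * \sum_mu \sum_b \sum_k g mu b * w b * (pY mu k * w k)
    + c * \sum_mu \sum_b \sum_k g b mu * w b * (pY mu k * w k)).
  rewrite !mulr_sumr -!big_split /=; apply: eq_bigr => mu _.
  rewrite h1 -[c * _ + c * _]mulrDr.
  have -> : \sum_b \sum_k g mu b * w b * (pY mu k * w k) + \sum_b \sum_k g b mu * w b * (pY mu k * w k)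
     = \sum_b \sum_k (g mu b + g b mu) * w b * (pY mu k * w k).
    rewrite -big_split /=; apply: eq_bigr => b _; rewrite -big_split /=; apply: eq_bigr => k _ /=; ring.
  rewrite h2; ring.
congr (_ + (_ + _)); congr (_ * _).
- by rewrite E1.
- rewrite E2; apply: eq_bigr => k _; apply: eq_bigr => b _; apply: eq_bigr => mu _; ring.
- rewrite E1; apply: eq_bigr => b _; apply: eq_bigr => k _; apply: eq_bigr => mu _; ring.
Qed.

End Alg.

Section Extra.
Variables (R : realType) (N : nat).

Lemma coord_chain (c : R -> 'rV[R]_N) l k : derivable c l 1 ->
  is_derive l (1:R) (fun s => xcomp (c s) k) (xcomp (derive1 c l) k).
Proof.
move=> dc.
have dF : differentiable (fun w : 'rV[R]_N => xcomp w k) (c l).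
  exact: differentiable_coord.
apply: isd_eq; first exact: (chain dF dc).
have pd : forall j y, pder (fun w : 'rV[R]_N => xcomp w k) j y = (k == j)%:R.
  move=> j y; rewrite /pder.
  have H : is_derive y (evec R j) (fun w : 'rV[R]_N => xcomp w k : R) ((k == j)%:R).
    apply: isd_line.
    have -> : (fun h : R => xcomp (h *: evec R j + y) k) = (fun h : R => h * (k == j)%:R + xcomp y k).
      by apply/funext => h; rewrite xcomp_line.
    exact: isd_aff.
  exact: (@derive_val _ _ _ _ _ _ _ H).
under eq_bigr do rewrite pd mulrC eq_sym.
by rewrite sum_delta.
Qed.

Lemma sum_vp (g : 'I_N -> 'I_N -> R) (w : 'I_N -> R) (c : R) :
  \sum_mu w mu * (c * \sum_b (g mu b + g b mu) * w b) =
  2 * c * \sum_a \sum_b g a b * w a * w b.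
Proof.
have -> : \sum_mu w mu * (c * \sum_b (g mu b + g b mu) * w b) =
   c * (\sum_a \sum_b g a b * w a * w b + \sum_mu \sum_b g b mu * w mu * w b).
  rewrite -big_split mulr_sumr; apply: eq_bigr => mu _ /=.
  rewrite mulrCA; congr (c * _); rewrite mulr_sumr -big_split; apply: eq_bigr => b _ /=; ring.
rewrite [X in _ + X]exchange_big /=.
have -> : \sum_b \sum_mu g b mu * w mu * w b = \sum_a \sum_b g a b * w a * w b.
  by apply: eq_bigr => a _; apply: eq_bigr => b _; ring.
ring.
Qed.

End Extra.

Unset Implicit Arguments.

Theorem mainTheorem3 (R : realType) (N : nat)
  (U : set 'rV[R]_N)
  (g : 'I_N -> 'I_N -> 'rV[R]_N -> R)
  (Y : 'I_N -> 'rV[R]_N -> R) (omega : 'rV[R]_N -> R) (m : R)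
  (xc : R -> 'rV[R]_N) (nn : R -> R) (a b lam0 : R) :
  (* chart domain and pseudo-Riemannian metric on it *)
  open U ->
  (forall x, U x -> forall mu nu, g mu nu x = g nu mu x) ->
  (forall x, U x -> \det (\matrix_(i, j) g i j x) != 0) ->
  (forall x, U x -> forall mu nu, differentiable (g mu nu) x) ->
  (* conformal Killing vector field Y with conformal factor omega *)
  (forall x, U x -> forall mu, differentiable (Y mu) x) ->
  {within U, continuous omega} ->
  (forall x, U x -> forall mu nu,
      lie_metric g Y mu nu x = 2 * omega x * g mu nu x) ->
  (* the solution (x(lam), n(lam)) on the interval ]a, b[ *)
  a < lam0 < b ->
  (forall l, a < l < b -> U (xc l)) ->
  (forall l, a < l < b -> derivable xc l 1) ->
  (forall l, a < l < b -> derivable (derive1 xc) l 1) ->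
  (forall l, a < l < b -> derivable nn l 1) ->
  (forall l, a < l < b -> 0 < nn l) ->
  (* Euler-Lagrange equations of L *)
  (forall l, a < l < b -> forall mu,
      derive1 (fun s => dL_dv g m mu (xc s) (derive1 xc s) (nn s)) l
      = dL_dx g m mu (xc l) (derive1 xc l) (nn l)) ->
  (forall l, a < l < b -> dL_dn g m (xc l) (derive1 xc l) (nn l) = 0) ->
  let W := fun l => oint (fun s => nn s * omega (xc s)) lam0 l in
  let I := fun l => \sum_mu Y mu (xc l) * momentum g mu (xc l) (derive1 xc l) (nn l)
                    + m ^+ 2 * W l in
  let X := fun (mu : 'I_N) l =>
             Y mu (xc l) - xcomp (derive1 xc l) mu / nn l * W l in
  (* (i) I is constant along the solution *)
  (forall l, a < l < b -> I l = I lam0) /\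
  (* (ii) pr^(1) X (L) = 0 along the solution *)
  (forall l, a < l < b ->
     \sum_mu (X mu l * dL_dx g m mu (xc l) (derive1 xc l) (nn l)
              + derive1 (X mu) l * dL_dv g m mu (xc l) (derive1 xc l) (nn l)) = 0) /\
  (* ... and the associated Noether charge X^mu dL/dxdot^mu equals I *)
  (forall l, a < l < b ->
     \sum_mu X mu l * dL_dv g m mu (xc l) (derive1 xc l) (nn l) = I l).
Proof.
Proof.
move=> oU gsym _ dg dY cO lie /andP[al0 l0b] HU dxc dv dn npos EL EN W I X.
pose p mu s := dL_dv g m mu (xc s) (derive1 xc s) (nn s).
have pE : forall mu, p mu = fun s => (2 * nn s)^-1 *
    \sum_b (g mu b (xc s) + g b mu (xc s)) * xcomp (derive1 xc s) b.
  by move=> mu; apply/funext => s; exact: dL_dv_E.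
have n0 : forall s, a < s < b -> nn s != 0.
  by move=> s hs; rewrite gt_eqF // npos.
have QE : forall s, a < s < b -> \sum_a0 \sum_b0 g a0 b0 (xc s) *
     xcomp (derive1 xc s) a0 * xcomp (derive1 xc s) b0 = - (m ^+ 2 * nn s ^+ 2).
  by move=> s hs; apply: dL_dn_E; [exact: n0 | exact: EN].
have momE : forall mu s, a < s < b ->
    momentum g mu (xc s) (derive1 xc s) (nn s) = p mu s.
  move=> mu s hs; rewrite pE /momentum.
  have -> : \sum_b0 (g mu b0 (xc s) + g b0 mu (xc s)) * xcomp (derive1 xc s) b0 =
     2 * \sum_b0 g mu b0 (xc s) * xcomp (derive1 xc s) b0.
    rewrite mulr_sumr; apply: eq_bigr => b0 _.
    by rewrite (gsym _ (HU s hs) b0 mu); ring.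
  by field; rewrite n0.
have vp : forall s, a < s < b ->
    \sum_mu xcomp (derive1 xc s) mu * p mu s = - (m ^+ 2 * nn s).
  move=> s hs; under eq_bigr do rewrite pE /=.
  rewrite (sum_vp (fun a0 b0 => g a0 b0 (xc s))) QE //.
  by field; rewrite n0.
have iii : forall s, a < s < b -> \sum_mu X mu s * p mu s = I s.
  move=> s hs; rewrite /X /I.
  have -> : \sum_mu (Y mu (xc s) - xcomp (derive1 xc s) mu / nn s * W s) * p mu s =
     \sum_mu Y mu (xc s) * p mu s - W s / nn s * \sum_mu xcomp (derive1 xc s) mu * p mu s.
    rewrite mulr_sumr -sumrB; apply: eq_bigr => mu _; ring.
  rewrite vp //; congr (_ + _).
    by apply: eq_bigr => mu _; rewrite momE.
  by field; rewrite n0.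
have dnl : forall l, a < l < b -> is_derive l (1:R) nn (derive1 nn l).
  by move=> l hl; rewrite derive1E; exact: derivableP (dn l hl).
have dYl : forall l mu, a < l < b -> is_derive l (1:R) (fun s => Y mu (xc s))
    (\sum_k pder (Y mu) k (xc l) * xcomp (derive1 xc l) k).
  by move=> l mu hl; exact: chain (dY _ (HU l hl) mu) (dxc l hl).
have dgl : forall l a0 b0, a < l < b -> is_derive l (1:R) (fun s => g a0 b0 (xc s))
    (\sum_k pder (g a0 b0) k (xc l) * xcomp (derive1 xc l) k).
  by move=> l a0 b0 hl; exact: chain (dg _ (HU l hl) a0 b0) (dxc l hl).
have dcl : forall l k, a < l < b -> is_derive l (1:R) (fun s => xcomp (derive1 xc s) k)
    (xcomp (derive1 (derive1 xc) l) k).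
  by move=> l k hl; exact: coord_chain (dv l hl).
have cO' : {in U, continuous omega} by rewrite -continuous_open_subspace.
have dWl : forall l, a < l < b -> is_derive l (1:R) W (nn l * omega (xc l)).
  move=> l hl; apply: (@ftc_oint R (fun s => nn s * omega (xc s)) a b) => //.
    by rewrite al0 l0b.
  move=> s hs.
  apply: (@continuousM R R nn (omega \o xc) s).
    exact/differentiable_continuous/derivable1_diffP/dn.
  apply: continuous_comp.
    exact/differentiable_continuous/derivable1_diffP/dxc.
  by apply: cO'; rewrite inE; exact: HU.
have dpl : forall l mu, a < l < b ->
    is_derive l (1:R) (p mu) (dL_dx g m mu (xc l) (derive1 xc l) (nn l)).
  move=> l mu hl.
  have H2 : 2 * nn l != 0 by rewrite mulf_neq0 ?pnatr_eq0 ?n0.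
  have H := isdM (isdV (f := fun y : R => 2 * nn y) (x := l) H2 (isdM (isdC l 1 2) (dnl l hl)))
     (isd_sum (fun b0 => isdM (isdD (dgl l mu b0 hl) (dgl l b0 mu hl)) (dcl l b0 hl))).
  apply: DeriveDef.
    rewrite pE; exact: (@ex_derive _ _ _ _ _ _ _ H).
  by rewrite -derive1E; exact: EL.
have dXl : forall l mu, a < l < b -> is_derive l (1:R) (X mu) (derive1 (X mu) l).
  move=> l mu hl.
  have H := isdB (dYl l mu hl) (isdM (isdM (dcl l mu hl) (isdV (n0 l hl) (dnl l hl))) (dWl l hl)).
  rewrite derive1E; apply: derivableP; exact: (@ex_derive _ _ _ _ _ _ _ H).
have dI0 : forall l, a < l < b -> is_derive l (1:R) I 0.
  move=> l hl.
  have H := isdD (isd_sum (fun mu => isdM (dYl l mu hl) (dpl l mu hl)))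
                 (isdM (isdC l 1 (m ^+ 2)) (dWl l hl)).
  apply: (near_eq_is_derive _ (isd_eq H _)).
    have : \forall t \near l, t \in `]a, b[ by apply: near_in_itvoo; rewrite in_itv /=.
    apply: filterS => t; rewrite in_itv /= => ht /=.
    rewrite /I; congr (_ + _); apply: eq_bigr => mu _; by rewrite momE.
  have dgx : forall a0 b0, differentiable (g a0 b0) (xc l) by move=> a0 b0; exact: dg (HU l hl) a0 b0.
  under eq_bigr do rewrite (dL_dx_E _ _ _ _ dgx) pE /=.
  rewrite (key_alg (fun a0 b0 => g a0 b0 (xc l)) (fun a0 b0 k => pder (g a0 b0) k (xc l))
     (fun k => Y k (xc l)) (fun mu k => pder (Y mu) k (xc l)) (fun k => xcomp (derive1 xc l) k)).
  have lieE : forall a0 b0, \sum_k (Y k (xc l) * pder (g a0 b0) k (xc l) + g k b0 (xc l) * pder (Y k) a0 (xc l)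
     + g a0 k (xc l) * pder (Y k) b0 (xc l)) = 2 * omega (xc l) * g a0 b0 (xc l).
    by move=> a0 b0; exact: (lie _ (HU l hl) a0 b0).
  under eq_bigr do under eq_bigr do rewrite lieE.
  have -> : \sum_a0 \sum_b0 2 * omega (xc l) * g a0 b0 (xc l) * xcomp (derive1 xc l) a0 * xcomp (derive1 xc l) b0
     = 2 * omega (xc l) * \sum_a0 \sum_b0 g a0 b0 (xc l) * xcomp (derive1 xc l) a0 * xcomp (derive1 xc l) b0.
    rewrite mulr_sumr; apply: eq_bigr => a0 _; rewrite mulr_sumr; apply: eq_bigr => b0 _; ring.
  rewrite QE //; field; exact: n0.
have cst : forall x y, a < x -> x <= y -> y < b -> I x = I y.
  move=> x y ax xy yb.
  have H1 : forall z, z \in `]x, y[ -> is_derive z (1:R) I ((fun _ => 0) z).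
    move=> z; rewrite in_itv /= => /andP[xz zy]; apply: dI0; apply/andP; split; lra.
  have H2 : {within `[x, y], continuous I}.
    apply: continuous_in_subspaceT => z; rewrite inE /= in_itv /= => /andP[xz zy].
    have hz : a < z < b by apply/andP; split; lra.
    have [dz _] := dI0 z hz.
    exact/differentiable_continuous/derivable1_diffP.
  have [c _ E] := @MVT_segment R I (fun _ => 0) x y xy H1 H2.
  by move/eqP: E; rewrite mul0r subr_eq0 => /eqP.
split.
  move=> l /andP[al lb]; case: (leP l lam0) => h.
    exact: cst.
  by symmetry; apply: cst => //; exact: ltW.
split; last first.
  by move=> l hl; exact: iii.
move=> l hl.
have HJ : is_derive l (1:R) (fun s => \sum_mu X mu s * p mu s)
   (\sum_mu (X mu l * dL_dx g m mu (xc l) (derive1 xc l) (nn l) + p mu l * derive1 (X mu) l))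
  := isd_sum (fun mu => isdM (dXl l mu hl) (dpl l mu hl)).
have HJ0 : is_derive l (1:R) (fun s => \sum_mu X mu s * p mu s) 0.
  apply: (near_eq_is_derive _ (dI0 l hl)).
  have : \forall t \near l, t \in `]a, b[ by apply: near_in_itvoo; rewrite in_itv /=.
  by apply: filterS => t; rewrite in_itv /= => ht; rewrite iii.
have := @derive_val _ _ _ _ _ _ _ HJ; rewrite (@derive_val _ _ _ _ _ _ _ HJ0) => E.
rewrite [RHS]E; apply: eq_bigr => mu _; congr (_ + _); exact: mulrC.
Qed.
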